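(* Let $(V,d)$ be a finite metric space with $|V|=n$, let $k\ge1$ be an integer, and let $\mathit{OPT}=\min_{C\subseteq V,\,|C|\le k}\max_{v\in V}d(v,C)$ be the optimal $k$-center radius. Suppose there are $m$ machines, each able to hold at most $c$ points, with $n/m\le c$ and $k\cdot m\le c$. Then the $k$-center problem on $V$ can be solved in two MapReduce rounds with approximation factor $4$, namely by the following procedure: in the first round, partition $V$ arbitrarily into sets $V_1,\dots,V_m$ with $|V_i|\le\lceil n/m\rceil$, and on each machine $i$ in parallel run Gonzalez's algorithm with parameter $k$ on $V_i$, obtaining a center set $C_i$; in the second round, send $C=\bigcup_i C_i$ (which has at most $k\cdot m\le c$ points) to a single machine and run Gonzalez's algorithm with parameter $k$ on $C$, obtaining $C^G$. The output $C^G$ has at most $k$ points and satisfies $\max_{v\in V} d(v,C^G)\le 4\cdot\mathit{OPT}$.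
   Context: Gonzalez's algorithm on a finite point set $S$ with parameter $k$: choose an arbitrary point of $S$ as the first center; then repeatedly choose as a new center a point of $S$ whose distance to the set of already chosen centers is maximum (ties broken arbitrarily), until $k$ centers have been chosen (or all of $S$, if $|S|\le k$). Here $d(v,C)=\min_{x\in C}d(v,x)$. *)

(* Defs.v *)
From mathcomp Require Import all_boot all_order all_algebra.
Set Implicit Arguments. Unset Strict Implicit. Unset Printing Implicit Defensive.
Import Order.TTheory GRing.Theory Num.Theory.
Local Open Scope ring_scope.

Section Defs.
Variables (R : realFieldType) (T : finType) (d : T -> T -> R).

Definition is_metric : Prop :=
  [/\ forall x y, d x y = 0 <-> x = y,
      forall x y, d x y = d y x &
      forall x y z, d x z <= d x y + d y z].

(* d(v, C) = min_{x in C} d(v, x).  Convention: 0 for empty C; the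
   definition is only ever used with a nonempty C below. *)
Definition dist_set (v : T) (C : {set T}) : R :=
  if [pick x in C] is Some x0 then \big[Num.min/d v x0]_(x in C) d v x else 0.

Definition radius (V C : {set T}) : R :=
  \big[Num.max/0]_(v in V) dist_set v C.

(* gonzalez k S C : C is a possible output of Gonzalez's algorithm with
   parameter k on S (first center arbitrary, ties broken arbitrarily).
   The sequence s lists the centers in the order they were chosen. *)
Definition gonzalez (k : nat) (S C : {set T}) : Prop :=
  exists s : seq T,
    [/\ uniq s, {subset s <= S}, size s = minn k #|S|,
        C = [set x in s] &
        forall (p : seq T) (c : T) (r : seq T), s = p ++ c :: r -> p != [::] ->
          forall y, y \in S -> dist_set y [set x in p] <= dist_set c [set x in p]].
End Defs.

(* Main.v *)
Require Import Defs.
From mathcomp Require Import all_boot all_order all_algebra.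
Import Order.TTheory GRing.Theory Num.Theory.
Local Open Scope ring_scope.
Set Implicit Arguments. Unset Strict Implicit.

Section Aux.
Variables (R : realFieldType) (T : finType) (d : T -> T -> R).
Hypothesis dm : is_metric d.

Lemma d_ge0 x y : 0 <= d x y.
Proof.
case: dm => h0 hs ht.
have := ht x y x; rewrite (proj2 (h0 x x) erefl) (hs y x) -mulr2n.
by rewrite pmulrn_lge0.
Qed.

Lemma bigmin_le_gen (a : R) (r : seq T) (P : pred T) (F : T -> R) x :
  x \in r -> P x -> \big[Num.min/a]_(i <- r | P i) F i <= F x.
Proof.
elim: r => // y r IH; rewrite inE big_cons => /orP[/eqP <-|xr] Px.
  by rewrite Px ge_min lexx.
case: (P y); last exact: IH.
by rewrite ge_min IH ?orbT.
Qed.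

Lemma dist_set_le v (C : {set T}) x : x \in C -> dist_set d v C <= d v x.
Proof.
move=> xC; rewrite /dist_set; case: pickP => [x0 _|/(_ x)]; last by rewrite xC.
by apply: bigmin_le_gen => //; rewrite mem_index_enum.
Qed.

Lemma dist_set_ex v (C : {set T}) x1 : x1 \in C -> exists2 x, x \in C & dist_set d v C = d v x.
Proof.
move=> x1C; rewrite /dist_set; case: pickP => [x0 x0C|/(_ x1)]; last by rewrite x1C.
apply: (big_ind (fun r => exists2 x, x \in C & r = d v x)).
- by exists x0.
- move=> a b [xa ? ->] [xb ? ->].
  by case: (leP (d v xa) (d v xb)) => _; [exists xa|exists xb].
- by move=> i iC; exists i.
Qed.

Lemma dist_set_ge0 v (C : {set T}) : 0 <= dist_set d v C.
Proof.
case: (set_0Vmem C) => [->|[x xC]].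
  by rewrite /dist_set; case: pickP => [x0|//]; rewrite inE.
by have [y _ ->] := dist_set_ex v xC; apply: d_ge0.
Qed.

Lemma dist_set_tri v x (C : {set T}) x1 : x1 \in C ->
  dist_set d v C <= d v x + dist_set d x C.
Proof.
move=> x1C; have [z zC ->] := dist_set_ex x x1C.
apply: le_trans (dist_set_le v zC) _; case: dm => _ _; apply.
Qed.

Lemma dist_set_sub v (A B : {set T}) x1 : x1 \in A -> A \subset B ->
  dist_set d v B <= dist_set d v A.
Proof.
move=> x1A AB; have [z zA ->] := dist_set_ex v x1A.
by apply: dist_set_le; apply: (subsetP AB).
Qed.

Lemma bigmax_ge_gen (a : R) (r : seq T) (P : pred T) (F : T -> R) x :
  x \in r -> P x -> F x <= \big[Num.max/a]_(i <- r | P i) F i.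
Proof.
elim: r => // y r IH; rewrite inE big_cons => /orP[/eqP <-|xr] Px.
  by rewrite Px le_max lexx.
case: (P y); last exact: IH.
by rewrite le_max IH ?orbT.
Qed.

Lemma radius_ge (V C : {set T}) v : v \in V -> dist_set d v C <= radius d V C.
Proof. by move=> vV; apply: bigmax_ge_gen => //; rewrite mem_index_enum. Qed.

Lemma radius_ge0 (V C : {set T}) : 0 <= radius d V C.
Proof.
apply: (big_ind (fun r => 0 <= r)) => //.
  by move=> a b ha hb; rewrite le_max ha.
by move=> i _; apply: dist_set_ge0.
Qed.

Lemma radius_le (V C : {set T}) b : 0 <= b -> (forall v, v \in V -> dist_set d v C <= b) ->
  radius d V C <= b.
Proof.
move=> b0 h; apply: (big_ind (fun r => r <= b)) => //.
by move=> x y hx hy; rewrite ge_max hx hy.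
Qed.

Lemma gonz_card k (S C : {set T}) : gonzalez d k S C -> (#|C| = minn k #|S|)%N.
Proof.
case=> s [us _ ss -> _]; rewrite cardsE.
by move/card_uniqP: us => ->.
Qed.

Lemma gonz_ne k (S C : {set T}) x : gonzalez d k S C -> (1 <= k)%N -> x \in S ->
  exists y, y \in C.
Proof.
case=> s [us _ ss -> _] k1 xS.
case: s us ss => [|a s] _ /=.
  move/esym/eqP; rewrite eqn0Ngt leq_min k1 /= => /negP []. 
  by apply/card_gt0P; exists x.
by move=> _; exists a; rewrite inE mem_head.
Qed.

Lemma gonz_bound k (S C : {set T}) (Copt : {set T}) y :
  gonzalez d k S C -> (#|Copt| <= k)%N -> Copt != set0 -> y \in S ->
  dist_set d y C <= 2%:R * radius d [set: T] Copt.
Proof.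
case=> s [us sS ss CE gz] ck /set0Pn [o0 o0C] yS.
have R0 := radius_ge0 [set: T] Copt.
have hR0 : 0 <= 2%:R * radius d [set: T] Copt by rewrite mulr_ge0.
case: (leqP #|S| k) => hk.
  have eqS : C = S.
    apply/eqP; rewrite eqEcard; apply/andP; split.
      by apply/subsetP => z; rewrite CE inE => /sS.
    have gc : #|C| = minn k #|S| by apply: gonz_card; exists s.
    by rewrite gc minnC (minn_idPl hk).
  rewrite eqS; apply: le_trans (dist_set_le y yS) _.
  by case: dm => h0 _ _; rewrite (proj2 (h0 y y) erefl).
have sk : size s = k by rewrite ss (minn_idPl (ltnW hk)).
pose z (i : 'I_k.+1) := nth y s i.
have hz : forall i j : 'I_k.+1, (i < j)%N -> dist_set d y C <= d (z i) (z j).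
  move=> i j ij.
  case: (ltnP j k) => jk.
    have sdec : s = take j s ++ nth y s j :: drop j.+1 s.
      by rewrite -drop_nth ?sk // cat_take_drop.
    have ptk : size (take j s) = j by rewrite size_take sk jk.
    have zi : z i \in [set x in take j s].
      rewrite inE /z -(nth_take y ij); apply: mem_nth; by rewrite ptk.
    have pne : take j s != [::].
      by rewrite -size_eq0 ptk -lt0n (leq_ltn_trans (leq0n i) ij).
    apply: le_trans (dist_set_sub y zi _) _.
      by rewrite CE; apply/subsetP => x; rewrite !inE => /mem_take.
    apply: le_trans (gz _ _ _ sdec pne y yS) _.
    case: dm => _ hs _; rewrite /z hs; exact: dist_set_le.
  have jk' : nat_of_ord j = k by apply/eqP; rewrite eqn_leq jk -ltnS ltn_ord.
  have -> : z j = y by rewrite /z jk' nth_default ?sk.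
  case: dm => _ hs _; rewrite hs; apply: dist_set_le.
  rewrite CE inE /z; apply: mem_nth; rewrite sk.
  by rewrite (leq_trans ij) // jk'.
have hne : forall i j : 'I_k.+1, i != j -> dist_set d y C <= d (z i) (z j).
  move=> i j; rewrite neq_ltn => /orP[] h; first exact: hz.
  by case: dm => _ hs _; rewrite hs; apply: hz.
have [f hf] : exists f : 'I_k.+1 -> T, forall i,
    f i \in Copt /\ dist_set d (z i) Copt = d (z i) (f i).
  apply: (@fin_all_exists _ (fun _ => T) (fun i x => x \in Copt /\ dist_set d (z i) Copt = d (z i) x)) => i; have [x xC e] := dist_set_ex (z i) o0C.
  by exists x.
case: (boolP (injectiveb f)) => [/injectiveP finj|/injectivePn [i [j ij fij]]].
  have : (#|[set f x | x in [set: 'I_k.+1]]| <= #|Copt|)%N.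
    apply: subset_leq_card; apply/subsetP => x /imsetP [i _ ->].
    by case: (hf i).
  by rewrite card_imset // cardsT card_ord => h; have := leq_trans h ck; rewrite ltnn.
apply: le_trans (hne i j ij) _.
case: dm => _ hs ht.
apply: le_trans (ht _ (f i) _) _.
rewrite mulr2n mulrDl mul1r; apply: lerD.
  case: (hf i) => _ <-; apply: radius_ge; by rewrite inE.
rewrite fij hs; case: (hf j) => _ <-; apply: radius_ge; by rewrite inE.
Qed.

End Aux.

Theorem lemma2 (R : realFieldType) (T : finType) (d : T -> T -> R)
    (k m c : nat) (P : 'I_m -> {set T}) (Cs : 'I_m -> {set T}) (CG : {set T}) :
  is_metric d ->
  (1 <= k)%N -> (0 < m)%N ->
  (#|T| <= c * m)%N ->        (* n / m <= c *)
  (k * m <= c)%N ->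
  (* round 1: a partition of V = T into V_1..V_m of sizes <= ceil(n/m) *)
  (forall i j, i != j -> [disjoint P i & P j]) ->
  (\bigcup_(i < m) P i = [set: T]) ->
  (forall i, #|P i| <= (#|T| + m).-1 %/ m)%N ->
  (forall i, gonzalez d k (P i) (Cs i)) ->
  (* round 2: Gonzalez on the union of the local center sets *)
  gonzalez d k (\bigcup_(i < m) Cs i) CG ->
  [/\ (#|\bigcup_(i < m) Cs i| <= c)%N,
      (#|CG| <= k)%N &
      forall Copt : {set T}, Copt != set0 -> (#|Copt| <= k)%N ->
        radius d [set: T] CG <= 4 * radius d [set: T] Copt].
Proof.
move=> dm k1 m0 _ kmc _ Pcov _ g1 g2; split.
- apply: leq_trans kmc.
  have -> : (k * m = \sum_(i < m) k)%N by rewrite sum_nat_const card_ord mulnC.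
  apply: (big_ind2 (fun (S : {set T}) (n : nat) => #|S| <= n)%N).
  + by rewrite cards0.
  + move=> A a B b ha hb; apply: leq_trans (leq_card_setU A B) _.
    exact: leq_add.
  + by move=> i _; rewrite (gonz_card (g1 i)) geq_minl.
- by rewrite (gonz_card g2) geq_minl.
move=> Copt Cne Ck.
apply: radius_le => //.
  by rewrite mulr_ge0 // (radius_ge0 dm).
move=> v _.
have : v \in \bigcup_(i < m) P i by rewrite Pcov inE.
case/bigcupP => i _ vP.
have [x1 x1C] := gonz_ne (g1 i) k1 vP.
have [x xC dx] := dist_set_ex d v x1C.
have xU : x \in \bigcup_(i < m) Cs i by apply/bigcupP; exists i.
have [y yG] := gonz_ne g2 k1 xU.
apply: le_trans (dist_set_tri dm v x yG) _.
have -> : (4 : R) = 2%:R + 2%:R by rewrite -natrD.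
rewrite mulrDl; apply: lerD.
  rewrite -dx; exact: (gonz_bound dm (g1 i) Ck Cne vP).
exact: (gonz_bound dm g2 Ck Cne xU).
Qed.
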